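(* Let $G$ be a finite simple graph without isolated vertices that contains exactly two odd cycles. Then $G$ is $(3,2)$-critical if and only if $G\in\mathcal A\cup\mathcal B$, where $\mathcal A=\{C_{2k+1}+C_{2\ell+1} : k,\ell\ge1\}$ ($+$ denotes disjoint union) and $\mathcal B$ is the family of graphs obtained from $C_{2k+1}+C_{2\ell+1}$, $k,\ell\ge1$, by identifying a vertex of $C_{2k+1}$ with a vertex of $C_{2\ell+1}$.
   Context: An odd cycle is a cycle (subgraph) of odd length. For a graph $G$, ${\rm es}_{\chi}(G)$ is the minimum number of edges of $G$ whose removal results in a spanning subgraph $G_1$ with $\chi(G_1)=\chi(G)-1$. $G$ is edge-stability critical if ${\rm es}_{\chi}(G-e)<{\rm es}_{\chi}(G)$ for every edge $e$. $G$ is $(3,2)$-critical if it is edge-stability critical with $\chi(G)=3$ and ${\rm es}_{\chi}(G)=2$. *)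

(* Defs.v *)
From mathcomp Require Import all_boot.
Set Implicit Arguments. Unset Strict Implicit. Unset Printing Implicit Defensive.

(* A finite simple graph on vertex set T (a finType) is given by its edge set
   E : {set {set T}}, every edge being a 2-element subset of T. *)
Section Graphs.
Variable T : finType.
Implicit Types (E F C : {set {set T}}) (V : {set T}).

Definition simple_graph E : Prop := forall e, e \in E -> #|e| = 2.

Definition no_isolated_vertex E : Prop :=
  forall x : T, exists2 e, e \in E & x \in e.

Definition colorable E (k : nat) : bool :=
  [exists f : {ffun T -> 'I_k},
     [forall x, forall y, ([set x; y] \in E) ==> (f x != f y)]].

(* chromatic number: least k admitting a proper k-colouring
   (#|T| colours always suffice, used as the default of the min). *)
Definition chi E : nat :=
  \big[minn/#|T|]_(k < #|T|.+1 | colorable E k) (k : nat).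

(* es_chi(G): least number of edges whose removal lowers chi by exactly one
   (default #|E| if no such set exists, which only happens when E is empty). *)
Definition es_chi E : nat :=
  \big[minn/#|E|]_(F : {set {set T}} |
        (F \subset E) && (chi (E :\: F) == (chi E).-1)) #|F|.

Definition edge_stability_critical E : Prop :=
  forall e, e \in E -> es_chi (E :\ e) < es_chi E.

Definition critical32 E : Prop :=
  [/\ edge_stability_critical E, chi E = 3 & es_chi E = 2].

Definition odd_cycle_on C V : Prop :=
  exists n (v : 'I_n -> T),
    [/\ 3 <= n, odd n, injective v,
        V = [set v i | i : 'I_n] &
        C = [set [set v i; v (ordS i)] | i : 'I_n]].

Definition odd_cycle C : Prop := exists V, odd_cycle_on C V.

Definition exactly_two_odd_cycles E : Prop :=
  exists C1 C2, C1 != C2 /\ [/\ C1 \subset E, C2 \subset E,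
                    odd_cycle C1, odd_cycle C2 &
                    forall C, C \subset E -> odd_cycle C -> C = C1 \/ C = C2].

Definition in_family_A E : Prop :=
  exists C1 V1 C2 V2, [/\ odd_cycle_on C1 V1, odd_cycle_on C2 V2,
     E = C1 :|: C2, V1 :|: V2 = setT & #|V1 :&: V2| = 0].

Definition in_family_B E : Prop :=
  exists C1 V1 C2 V2, [/\ odd_cycle_on C1 V1, odd_cycle_on C2 V2,
     E = C1 :|: C2, V1 :|: V2 = setT & #|V1 :&: V2| = 1].
End Graphs.

(* Main.v *)
Require Import Defs.
From mathcomp Require Import all_boot.
From mathcomp Require Import zify_ssreflect.
Set Implicit Arguments. Unset Strict Implicit. Unset Printing Implicit Defensive.

Lemma bigmin_le (I : finType) (P : pred I) (F : I -> nat) d i :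
  P i -> \big[minn/d]_(j | P j) F j <= F i.
Proof.
move=> Pi; rewrite /index_enum; have : i \in Finite.enum I by rewrite -enumT mem_enum.
elim: (Finite.enum I) => [//|x r IH]; rewrite inE big_cons.
case/orP=> [/eqP<-|ir]; first by rewrite Pi geq_minl.
case: (P x); last exact: IH.
by rewrite geq_min IH ?orbT.
Qed.

Lemma bigmin_ge (I : finType) (P : pred I) (F : I -> nat) d m :
  m <= d -> (forall i, P i -> m <= F i) -> m <= \big[minn/d]_(j | P j) F j.
Proof.
move=> md H; apply: (big_ind (fun x => m <= x)) => // x y mx my.
by rewrite leq_min mx my.
Qed.

Lemma bigmin_cases (I : finType) (P : pred I) (F : I -> nat) d :
  \big[minn/d]_(j | P j) F j = d \/ exists2 i, P i & \big[minn/d]_(j | P j) F j = F i.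
Proof.
apply: (big_ind (fun x => x = d \/ exists2 i, P i & x = F i)); first by left.
- move=> x y Hx Hy; rewrite /minn; case: ifP => _; [exact: Hx| exact: Hy].
- by move=> i Pi; right; exists i.
Qed.

Lemma simple_neq (T : finType) (E : {set {set T}}) x y :
  simple_graph E -> [set x; y] \in E -> x != y.
Proof.
move=> sE /sE; case: eqP => // ->; by rewrite setUid cards1.
Qed.

Lemma colorable_sub (T : finType) (E E' : {set {set T}}) k :
  E' \subset E -> colorable E k -> colorable E' k.
Proof.
move=> sub /existsP[f /forallP Hf]; apply/existsP; exists f; apply/forallP=> x.
apply/forallP=> y; apply/implyP=> exy.
by move/forallP: (Hf x) => /(_ y) /implyP; apply; apply: (subsetP sub).
Qed.

Lemma colorable_mono (T : finType) (E : {set {set T}}) k k' :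
  k <= k' -> colorable E k -> colorable E k'.
Proof.
move=> kk /existsP[f /forallP Hf]; apply/existsP; exists [ffun x => widen_ord kk (f x)].
apply/forallP=> x; apply/forallP=> y; apply/implyP=> exy.
move/forallP: (Hf x) => /(_ y) /implyP /(_ exy).
by rewrite !ffunE.
Qed.

Lemma colorable_card (T : finType) (E : {set {set T}}) :
  simple_graph E -> colorable E #|T|.
Proof.
move=> sE; apply/existsP; exists [ffun x => enum_rank x].
apply/forallP=> x; apply/forallP=> y; apply/implyP=> exy.
rewrite !ffunE; apply: contraNneq (simple_neq sE exy) => /enum_rank_inj ->.
by [].
Qed.

Lemma chi_col (T : finType) (E : {set {set T}}) :
  simple_graph E -> colorable E (chi E).
Proof.
move=> sE; rewrite /chi.
case: (bigmin_cases (fun k : 'I_#|T|.+1 => colorable E k) (fun k => k : nat) #|T|) => [->|[i Pi ->]] //.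
exact: colorable_card.
Qed.

Lemma chi_le (T : finType) (E : {set {set T}}) k :
  colorable E k -> k <= #|T| -> chi E <= k.
Proof.
move=> ck kT; rewrite /chi.
have kT' : k < #|T|.+1 by [].
exact: (bigmin_le (P := fun k : 'I_#|T|.+1 => colorable E k) (fun k => k : nat) _ (i := Ordinal kT')).
Qed.

Lemma chi_ge (T : finType) (E : {set {set T}}) m :
  (forall k, k < m -> ~~ colorable E k) -> m <= #|T| -> m <= chi E.
Proof.
move=> H mT; rewrite /chi; apply: bigmin_ge => // i ci.
rewrite leqNgt; apply/negP=> lt; by move: (H _ lt); rewrite ci.
Qed.

Lemma es_le (T : finType) (E F : {set {set T}}) :
  F \subset E -> chi (E :\: F) = (chi E).-1 -> es_chi E <= #|F|.
Proof.
move=> sF cF; rewrite /es_chi.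
apply: (@bigmin_le {set {set T}} (fun F => (F \subset E) && (chi (E :\: F) == (chi E).-1)) (fun F => #|F|) #|E| F).
by rewrite sF cF eqxx.
Qed.

Lemma es_ge (T : finType) (E : {set {set T}}) m :
  m <= #|E| -> (forall F : {set {set T}}, F \subset E -> chi (E :\: F) = (chi E).-1 -> m <= #|F|) ->
  m <= es_chi E.
Proof.
move=> mE H; rewrite /es_chi; apply: bigmin_ge => // F0 /andP[sF /eqP cF]; exact: H.
Qed.

Definition walkE (T : finType) (n : nat) (w : nat -> T) : {set {set T}} :=
  [set [set w (val i); w (val i).+1] | i : 'I_n].

Lemma walkE_mem (T : finType) n (w : nat -> T) k :
  k < n -> [set w k; w k.+1] \in walkE n w.
Proof. move=> kn; apply/imsetP; by exists (Ordinal kn). Qed.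

Lemma walkE_sub (T : finType) n n' (w w' : nat -> T) :
  (forall k, k < n' -> exists2 m, m < n & [set w' k; w' k.+1] = [set w m; w m.+1]) ->
  walkE n' w' \subset walkE n w.
Proof.
move=> H; apply/subsetP=> e /imsetP[k _ ->].
have [m mn ->] := H _ (ltn_ord k); exact: walkE_mem.
Qed.

Lemma walk_cycle (T : finType) n : forall (w : nat -> T), odd n ->
  (forall i, i < n -> w i != w i.+1) -> w n = w 0 ->
  exists C, odd_cycle C /\ C \subset walkE n w.
Proof.
elim/ltn_ind: n => n IH w on nd wn.
case: (boolP [exists i : 'I_n, exists j : 'I_n, (i < j) && (w i == w j)]).
- case/existsP=> i /existsP[j /andP[ij /eqP wij]].
  have jn := ltn_ord j.
  have hodd : odd (j - i) || odd (n - (j - i)).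
    have e : n = (j - i) + (n - (j - i)) by lia.
    move: on; rewrite {1}e oddD; by case: (odd _); case: (odd _).
  case/orP: hodd => ho.
  + have h1 : forall k, k < j - i -> w (i + k) != w (i + k.+1).
      by move=> k kn; rewrite addnS; apply: nd; lia.
    have h2 : w (i + (j - i)) = w (i + 0) by rewrite addn0 subnKC // ltnW.
    have [C [oC sC]] := IH (j - i) ltac:(lia) (fun k => w (i + k)) ho h1 h2.
    exists C; split => //; apply: subset_trans sC _; apply: walkE_sub => k kn.
    exists (i + k); first lia. by rewrite addnS.
  + pose w2 k := if k < i then w k else w (k + (j - i)).
    have h1 : forall k, k < n - (j - i) -> w2 k != w2 k.+1.
      move=> k kn; rewrite /w2; case: (ltnP k i) => ki.
      - case: (ltnP k.+1 i) => k1i; first by apply: nd; lia.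
        have ek : k.+1 = i by lia.
        rewrite ek subnKC; last exact: ltnW. rewrite -wij -ek; apply: nd; lia.
      - rewrite ltnNge (leqW ki) /= addSn; apply: nd; lia.
    have h2 : w2 (n - (j - i)) = w2 0.
      rewrite /w2 ltnNge (_ : i <= n - (j - i)) /=; last lia.
      rewrite subnK; last lia.
      rewrite wn; case: ifP => // /negbT; rewrite -leqNgt leqn0 => /eqP i0.
      by rewrite i0 subn0 add0n -wij i0.
    have [C [oC sC]] := IH (n - (j - i)) ltac:(lia) w2 ho h1 h2.
    * exists C; split => //; apply: subset_trans sC _; apply: walkE_sub => k kn.
      rewrite /w2; case: (ltnP k i) => ki.
      - exists k; first lia. case: (ltnP k.+1 i) => k1i //.
        have -> : k.+1 = i by lia.
        by rewrite subnKC ?wij //; exact: ltnW.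
      - exists (k + (j - i)); first lia. rewrite ltnNge (leqW ki) /=. by rewrite addSn.
- rewrite negb_exists => /forallP Hn.
  have n1 : n != 1.
    apply/eqP => n1; move: (nd 0 ltac:(lia)); by rewrite -n1 wn eqxx.
  have n3 : 3 <= n.
    case: n {IH Hn nd wn} on n1 => [|[|[|n]]] //.
  pose v (i : 'I_n) := w i.
  have vinj : injective v.
    move=> i j vij; apply/eqP; case: (ltngtP i j) => // c.
    + by move: (Hn i); rewrite negb_exists => /forallP /(_ j); rewrite c; move: vij; rewrite /v => ->; rewrite eqxx.
    + by move: (Hn j); rewrite negb_exists => /forallP /(_ i); rewrite c; move: vij; rewrite /v => ->; rewrite eqxx.
    + by apply/eqP/val_inj.
  exists ([set [set v i; v (ordS i)] | i : 'I_n]); split.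
  + exists [set v i | i : 'I_n]; exists n, v; split => //.
  + apply/subsetP=> e /imsetP[i _ ->]; rewrite /v /=.
    have -> : w (i.+1 %% n) = w i.+1.
      case: (ltnP i.+1 n) => c; first by rewrite modn_small.
      have e1 : i.+1 = n by have := ltn_ord i; lia.
      by rewrite e1 modnn wn.
    exact: walkE_mem.
Qed.

Lemma bip (T : finType) (E : {set {set T}}) :
  simple_graph E -> (forall C : {set {set T}}, C \subset E -> ~ odd_cycle C) -> colorable E 2.
Proof.
move=> sE H.
pose adj : rel T := fun x y => [set x; y] \in E.
have adjsym : symmetric adj by move=> x y; rewrite /adj setUC.
pose R : rel (T * bool) := fun p q => adj p.1 q.1 && (q.2 == ~~ p.2).
have Rsym : symmetric R.
  by case=> [x a] [y b]; rewrite /R /= adjsym; case: a; case: b.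
have csR := sym_connect_sym Rsym.
have csA := sym_connect_sym adjsym.
have lift : forall a x b0, connect adj a x -> exists b, connect R (a, b0) (x, b).
  move=> a x b0 /connectP[p pp ->]; elim: p a b0 pp => [|y p IH] a b0 /=.
    by exists b0.
  case/andP=> ay pp; have [b cb] := IH y (~~ b0) pp; exists b.
  apply: connect_trans cb; apply: connect1; by rewrite /R /= ay eqxx.
have parity : forall s p, path R s p -> (last s p).2 = s.2 (+) odd (size p).
  move=> s p; elim: p s => [|q p IH] s /=; first by rewrite addbF.
  case/andP=> /andP[_ /eqP e] pp; rewrite IH // e /=.
  by case: (s.2); case: (odd _).
have noodd : forall y, ~~ connect R (y, true) (y, false).
  move=> y; apply/negP => /connectP[p pp el].
  have op : odd (size p).
    by move: (parity _ _ pp); rewrite -el /=; case: (odd _).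
  pose x0 := (y, true).
  pose w i := (nth x0 (x0 :: p) i).1.
  have nd : forall i, i < size p -> [set w i; w i.+1] \in E.
    by move=> i ip; move/pathP: pp => /(_ x0 i ip) /andP[a _].
  have wn : w (size p) = w 0.
    rewrite /w /=; have := nth_last x0 (x0 :: p); rewrite /= => ->.
    by rewrite -el.
  have nd' : forall i, i < size p -> w i != w i.+1.
    by move=> i ip; apply: simple_neq sE (nd i ip).
  have := @walk_cycle T (size p) w op nd' wn; case=> C [oC sC].
  apply: (H C _ oC); apply: subset_trans sC _.
  by apply/subsetP=> e /imsetP[i _ ->]; exact: (nd _ (ltn_ord i)).
pose col x := connect R (root adj x, false) (x, true).
have key : forall x y, adj x y -> col x != col y.
  move=> x y axy.
  have ry : root adj y = root adj x.
    by apply/esym/(rootP csA); apply: connect1.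
  rewrite /col ry; set r := root adj x.
  case cx: (connect R (r, false) (x, true)); case cy: (connect R (r, false) (y, true)) => //.
  + have c1 : connect R (r, false) (y, false).
      apply: connect_trans cx _; apply: connect1; by rewrite /R /= axy.
    move: (noodd y); rewrite csR in cy.
    by rewrite (connect_trans cy c1).
  + have rx : connect adj r x by rewrite csA; exact: connect_root.
    have [b cb] := lift r x false rx.
    case: b cb => cb; first by rewrite cb in cx.
    have c1 : connect R (r, false) (y, true).
      apply: connect_trans cb _; apply: connect1; by rewrite /R /= axy.
    by rewrite c1 in cy.
apply/existsP; exists [ffun x => if col x then (ord_max : 'I_2) else ord0].
apply/forallP=> x; apply/forallP=> y; apply/implyP=> exy.
rewrite !ffunE; have := key x y exy.
by case: (col x); case: (col y).
Qed.

Lemma mod_small2 k n : k < n + n -> k %% n = if k < n then k else k - n.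
Proof.
move=> kn; case: ifP => c; first by rewrite modn_small.
have -> : k = (k - n) + n by lia.
rewrite modnDr modn_small; lia.
Qed.

Lemma cyc_view (T : finType) (C : {set {set T}}) V x :
  odd_cycle_on C V -> x \in V ->
  exists n (c : nat -> T), [/\ 3 <= n, odd n, c 0 = x, c n = c 0 & [/\
    (forall i, i < n -> [set c i; c i.+1] \in C),
    (forall i j, i <= n -> j <= n -> c i = c j ->
        [\/ i = j, (i = 0 /\ j = n) | (i = n /\ j = 0)]) &
    (forall y, y \in V -> exists2 b, b < n & c b = y)]].
Proof.
case=> n [v [n3 on vinj -> ->]] /imsetP[a0 _ ->].
have n0 : 0 < n by lia.
pose a := val a0.
have an : a < n := ltn_ord a0.
pose c i := v (Ordinal (ltn_pmod (i + a) n0)).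
have cE : forall i j, c i = c j -> (i + a) %% n = (j + a) %% n.
  by move=> i j /vinj /(congr1 val).
exists n, c; split => //; last split.
- rewrite /c; congr v; apply: val_inj => /=; by rewrite add0n modn_small.
- rewrite /c; congr v; apply: val_inj => /=; by rewrite add0n modnDl.
- move=> i ni; apply/imsetP; exists (Ordinal (ltn_pmod (i + a) n0)) => //.
  rewrite /c; congr [set _; v _]; apply: val_inj => /=.
  by rewrite -[((i + a) %% n).+1]addn1 modnDml addn1 addSn.
- move=> i j ni nj /cE; rewrite !mod_small2; try lia.
  move=> h.
  suff H : i = j \/ (i = 0 /\ j = n) \/ (i = n /\ j = 0).
    by case: H => [?|[?|?]]; [constructor 1|constructor 2|constructor 3].
  move: h; case: (ltnP (i + a) n); case: (ltnP (j + a) n); lia.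
- move=> y /imsetP[j0 _ ->].
  have jn := ltn_ord j0.
  exists (if a <= j0 then j0 - a else j0 + n - a); first by case: (leqP a j0); lia.
  rewrite /c; congr v; apply: val_inj => /=.
  case: (leqP a j0) => h1.
  + rewrite subnK // modn_small //.
  + rewrite mod_small2; last lia.
    rewrite subnK; last lia. case: ltnP => h2; lia.
Qed.

Lemma or3_or (A B C : Prop) : [\/ A, B | C] -> A \/ B \/ C.
Proof. by case; auto. Qed.

Lemma edge_distinct (T : finType) n (c : nat -> T) i j :
  3 <= n -> c n = c 0 ->
  (forall i j, i <= n -> j <= n -> c i = c j ->
        [\/ i = j, (i = 0 /\ j = n) | (i = n /\ j = 0)]) ->
  i < n -> j < n -> [set c i; c i.+1] = [set c j; c j.+1] -> i = j.
Proof.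
move=> n3 cn inj ni nj e.
have h1 : c i \in [set c j; c j.+1] by rewrite -e set21.
have h2 : c i.+1 \in [set c j; c j.+1] by rewrite -e set22.
case/set2P: h1 => /inj h1; case/set2P: h2 => /inj h2.
all: have := h1 ltac:(lia) ltac:(lia); have := h2 ltac:(lia) ltac:(lia).
all: move/or3_or => ?; move/or3_or => ?; lia.
Qed.

Lemma cycle_card (T : finType) (C : {set {set T}}) V :
  odd_cycle_on C V -> 3 <= #|C| /\ 3 <= #|V|.
Proof.
move=> oc; have oc' := oc.
case: oc' => n [v [n3 on vinj Ve Ce]].
have x0 : v (Ordinal (leq_trans (isT : 0 < 3) n3)) \in V by rewrite Ve imset_f.
have [m [c [m3 om c0 cm [cC cinj cV]]]] := cyc_view oc x0.
split; last by rewrite Ve card_imset // card_ord.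
apply: (leq_trans m3).
have -> : m = #|walkE m c|.
  rewrite card_in_imset ?card_ord // => i j _ _ e.
  by apply: val_inj; apply: (edge_distinct m3 cm cinj (ltn_ord i) (ltn_ord j) e).
apply: subset_leq_card; apply/subsetP=> e /imsetP[i _ ->]; exact: (cC _ (ltn_ord i)).
Qed.

Lemma cycle_edge_sub (T : finType) (C : {set {set T}}) V e :
  odd_cycle_on C V -> e \in C -> e \subset V.
Proof.
case=> n [v [_ _ _ -> ->]] /imsetP[i _ ->].
by apply/subsetP=> y /set2P[]->; rewrite imset_f.
Qed.

Lemma cycle_vertex_edge (T : finType) (C : {set {set T}}) V x :
  odd_cycle_on C V -> x \in V -> exists2 e, e \in C & x \in e.
Proof.
case=> n [v [_ _ _ -> ->]] /imsetP[i _ ->].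
exists [set v i; v (ordS i)]; [exact: imset_f | exact: set21].
Qed.

Lemma cycle_not2 (T : finType) (E C : {set {set T}}) :
  odd_cycle C -> C \subset E -> ~~ colorable E 2.
Proof.
case=> V oc sC; have oc' := oc.
case: oc' => n [v [n3 on vinj Ve Ce]].
have x0 : v (Ordinal (leq_trans (isT : 0 < 3) n3)) \in V by rewrite Ve imset_f.
have [m [c [m3 om c0 cm [cC cinj cV]]]] := cyc_view oc x0.
apply/negP=> /existsP[f /forallP Hf].
pose g i := val (f (c i)).
have step : forall i, i < m -> g i.+1 = 1 - g i.
  move=> i im; have := Hf (c i) => /forallP /(_ (c i.+1)) /implyP.
  move=> /(_ (subsetP sC _ (cC i im))).
  rewrite /g; case: (f (c i)) => [[|[|k]] p] //; case: (f (c i.+1)) => [[|[|k']] p'] //.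
have par : forall i, i <= m -> g i = if odd i then 1 - g 0 else g 0.
  elim=> [|i IH] im //=; rewrite step // IH; last lia.
  have : g 0 < 2 by exact: ltn_ord.
  case: (odd i) => /=; lia.
have := par m (leqnn m); rewrite om /g cm.
have : val (f (c 0)) < 2 by exact: ltn_ord.
lia.
Qed.

Ltac prune := repeat match goal with
 | H : is_true (_ \in _) |- _ => clear H
 | H : is_true (_ \subset _) |- _ => clear H
 | H : odd_cycle_on _ _ |- _ => clear H
 | H : simple_graph _ |- _ => clear H
 | H : forall _, _ |- _ => clear H
 end.
Ltac flia := prune; lia.

Definition cinj (T : finType) n (c : nat -> T) :=
  forall i j, i <= n -> j <= n -> c i = c j ->
        [\/ i = j, (i = 0 /\ j = n) | (i = n /\ j = 0)].

Lemma walk_contra (T : finType) (E C1 C2 : {set {set T}}) (n1 n2 : nat) (c1 c2 : nat -> T)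
  (b d0 : nat) (P : nat -> bool) (L : nat) (W : nat -> T) :
  simple_graph E -> C1 \subset E -> C2 \subset E ->
  (forall C : {set {set T}}, C \subset E -> odd_cycle C -> C = C1 \/ C = C2) ->
  (forall e : {set T}, e \in C1 -> e \notin C2) ->
  3 <= n1 -> c1 n1 = c1 0 -> cinj n1 c1 -> (forall i, i < n1 -> [set c1 i; c1 i.+1] \in C1) ->
  3 <= n2 -> c2 n2 = c2 0 -> cinj n2 c2 -> (forall i, i < n2 -> [set c2 i; c2 i.+1] \in C2) ->
  b < n1 -> d0 < n2 -> ~~ P d0 ->
  odd L -> W L = W 0 ->
  (forall k, k < L ->
     (exists2 i, i < b & [set W k; W k.+1] = [set c1 i; c1 i.+1]) \/
     (exists2 j, (j < n2) && P j & [set W k; W k.+1] = [set c2 j; c2 j.+1])) ->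
  False.
Proof.
move=> sE s1 s2 uniq disj n13 c1n i1 e1 n23 c2n i2 e2 bn dn Pd oL WL cl.
have WE : forall k, k < L -> [set W k; W k.+1] \in E.
  move=> k kL; case: (cl k kL) => [[i ib ->]|[j /andP[jn _] ->]].
  + apply: (subsetP s1); apply: e1; flia.
  + apply: (subsetP s2); exact: e2.
have nd : forall k, k < L -> W k != W k.+1 by move=> k kL; exact: simple_neq sE (WE k kL).
have [C [oC sC]] := walk_cycle oL nd WL.
have CE : C \subset E.
  apply: subset_trans sC _; apply/subsetP=> e /imsetP[k _ ->]; exact: (WE _ (ltn_ord k)).
case: (uniq C CE oC) => eC.
- have : [set c1 b; c1 b.+1] \in walkE L W by apply: (subsetP sC); rewrite eC e1.
  case/imsetP=> k _ ek; case: (cl k (ltn_ord k)) => [[i ib ei]|[j /andP[jn _] ej]].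
  + have := edge_distinct n13 c1n i1 bn (ltn_trans ib bn) (etrans ek ei); flia.
  + by move: (disj _ (e1 _ bn)); rewrite ek ej e2.
- have : [set c2 d0; c2 d0.+1] \in walkE L W by apply: (subsetP sC); rewrite eC e2.
  case/imsetP=> k _ ek; case: (cl k (ltn_ord k)) => [[i ib ei]|[j /andP[jn Pj] ej]].
  + by move: (disj _ (e1 i ltac:(flia))); rewrite -ei -ek e2.
  + have := edge_distinct n23 c2n i2 dn jn (etrans ek ej) => e.
    by move: Pd; rewrite e Pj.
Qed.

Lemma third_cycle (T : finType) (E C1 C2 : {set {set T}}) V1 V2 u w :
  simple_graph E -> C1 \subset E -> C2 \subset E ->
  (forall C : {set {set T}}, C \subset E -> odd_cycle C -> C = C1 \/ C = C2) ->
  (forall e : {set T}, e \in C1 -> e \notin C2) ->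
  odd_cycle_on C1 V1 -> odd_cycle_on C2 V2 ->
  u \in V1 -> u \in V2 -> w \in V1 -> w \in V2 -> u != w -> False.
Proof.
move=> sE s1 s2 uq disj oc1 oc2 u1 u2 w1 w2 uw.
have [n1 [c1 [n13 on1 c10 c1n [e1 i1 sj1]]]] := cyc_view oc1 u1.
have [n2 [c2 [n23 on2 c20 c2n [e2 i2 sj2]]]] := cyc_view oc2 u2.
have [b bn cb] := sj1 w w1.
have [d dn cd] := sj2 w w2.
have b0 : 0 < b by case: b bn cb => // _ cb; move: uw; rewrite -cb c10 eqxx.
have d0 : 0 < d by case: d dn cd => // _ cd; move: uw; rewrite -cd c20 eqxx.
have hodd : odd (b + d) || odd (b + (n2 - d)).
  have h : odd (n2 - d) = ~~ odd d by rewrite oddB ?on2 //; exact: ltnW.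
  rewrite !oddD h; by case: (odd b); case: (odd d).
case/orP: hodd => hodd.
- pose W k := if k <= b then c1 k else c2 (b + d - k).
  have Wb : forall k, b <= k -> k <= b + d -> W k = c2 (b + d - k).
    move=> k bk kbd; rewrite /W; case: leqP => kb //.
    have -> : k = b by flia.
    by rewrite cb -cd; congr c2; flia.
  apply: (walk_contra (P := fun j => j < d) (b := b) (d0 := d) (L := b + d) (W := W)
            sE s1 s2 uq disj n13 c1n i1 e1 n23 c2n i2 e2 bn dn _ hodd _ _).
  + by rewrite ltnn.
  + rewrite (Wb (b + d)) //; last flia.
    by rewrite subnn /W leq0n c10 c20.
  + move=> k kL; case: (ltnP k b) => kb.
    * left; exists k => //; rewrite /W (ltnW kb) kb //.
    * right; exists (b + d - k.+1).
      - apply/andP; split; flia.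
      - rewrite (Wb k kb); last flia.
        rewrite (Wb k.+1); [|flia|flia].
        have -> : b + d - k = (b + d - k.+1).+1 by flia.
        by rewrite setUC.
- pose W k := if k <= b then c1 k else c2 (d + k - b).
  have Wb : forall k, b <= k -> W k = c2 (d + k - b).
    move=> k bk; rewrite /W; case: leqP => kb //.
    have -> : k = b by flia.
    by rewrite cb -cd; congr c2; flia.
  apply: (walk_contra (P := fun j => d <= j) (b := b) (d0 := 0) (L := b + (n2 - d)) (W := W)
            sE s1 s2 uq disj n13 c1n i1 e1 n23 c2n i2 e2 bn _ _ hodd _ _).
  + flia.
  + by rewrite leqn0 -lt0n d0.
  + rewrite Wb; last flia.
    have -> : d + (b + (n2 - d)) - b = n2 by flia.
    by rewrite c2n c20 /W leq0n c10.
  + move=> k kL; case: (ltnP k b) => kb.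
    * left; exists k => //; rewrite /W (ltnW kb) kb //.
    * right; exists (d + k - b).
      - apply/andP; split; flia.
      - rewrite (Wb k kb) (Wb k.+1); last flia.
        by have -> : d + k.+1 - b = (d + k - b).+1 by flia.
Qed.

Lemma odd_card (T : finType) (C : {set {set T}}) : odd_cycle C -> 3 <= #|C| /\ 3 <= #|T|.
Proof.
case=> V oc; have [h1 h2] := cycle_card oc; split => //.
exact: leq_trans h2 (max_card _).
Qed.

Lemma chi_ge3 (T : finType) (E C : {set {set T}}) :
  odd_cycle C -> C \subset E -> 3 <= chi E.
Proof.
move=> oC sC; apply: chi_ge; last by case: (odd_card oC).
move=> k k3; apply/negP => ck; have := cycle_not2 oC sC.
by rewrite (colorable_mono _ ck) //; flia.
Qed.

Lemma chi3 (T : finType) (E C : {set {set T}}) :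
  odd_cycle C -> C \subset E -> colorable E 3 -> chi E = 3.
Proof.
move=> oC sC c3; apply/eqP; rewrite eqn_leq chi_le //; last by case: (odd_card oC).
exact: chi_ge3 oC sC.
Qed.

Lemma chi2 (T : finType) (E : {set {set T}}) :
  simple_graph E -> colorable E 2 -> (exists e, e \in E) -> chi E = 2.
Proof.
move=> sE c2 [e eE].
have /cards2P[x [y [xy ee]]] : #|e| == 2 by rewrite sE.
have T2 : 2 <= #|T| by rewrite -(sE e eE) max_card.
apply/eqP; rewrite eqn_leq chi_le //=.
apply: chi_ge => // k k2; apply/negP => ck.
have k1 : k <= 1 by flia.
have /existsP[f /forallP Hf] := colorable_mono k1 ck.
move: (Hf x) => /forallP /(_ y) /implyP; rewrite -ee => /(_ eE).
by rewrite (ord1 (f x)) (ord1 (f y)) eqxx.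
Qed.

Lemma noodd_col2 (T : finType) (E C1 C2 F : {set {set T}}) e1 e2 :
  simple_graph E ->
  (forall C : {set {set T}}, C \subset E -> odd_cycle C -> C = C1 \/ C = C2) ->
  e1 \in C1 -> e2 \in C2 -> e1 \in F -> e2 \in F -> colorable (E :\: F) 2.
Proof.
move=> sE uq e1C e2C e1F e2F; apply: bip.
  by move=> e /setDP[eE _]; apply: sE.
move=> C sC oC.
have sCE : C \subset E by apply: subset_trans sC (subsetDl _ _).
case: (uq C sCE oC) => eC.
- by move: (subsetP sC e1 (ltac:(by rewrite eC))) => /setDP[_]; rewrite e1F.
- by move: (subsetP sC e2 (ltac:(by rewrite eC))) => /setDP[_]; rewrite e2F.
Qed.

Lemma edge_out (T : finType) (C F : {set {set T}}) :
  3 <= #|C| -> #|F| <= 2 -> exists2 e, e \in C & e \notin F.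
Proof.
move=> h3 h2; apply/subsetPn/negP => sub.
have := subset_leq_card sub; flia.
Qed.

Lemma card_set2_le (T : finType) (a b : T) : #|[set a; b]| <= 2.
Proof. by rewrite cards2; case: (a != b). Qed.

Lemma hit_cycle (T : finType) (E F C : {set {set T}}) :
  odd_cycle C -> C \subset E -> chi (E :\: F) = 2 -> exists2 e, e \in C & e \in F.
Proof.
move=> oC sC c2; case: (boolP (C \subset E :\: F)) => h.
  by have := chi_ge3 oC h; rewrite c2.
case/subsetPn: h => e eC; rewrite in_setD (subsetP sC e eC) andbT negbK => eF.
by exists e.
Qed.

Lemma es_ge2 (T : finType) (E C1 C2 : {set {set T}}) :
  C1 \subset E -> C2 \subset E -> odd_cycle C1 -> odd_cycle C2 ->
  (forall e : {set T}, e \in C1 -> e \notin C2) -> chi E = 3 -> 2 <= es_chi E.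
Proof.
move=> s1 s2 o1 o2 disj c3; apply: es_ge.
  have [h _] := odd_card o1; have := subset_leq_card s1; flia.
move=> F sF; rewrite c3 /= => cF.
have [e1 e1C e1F] := hit_cycle o1 s1 cF.
have [e2 e2C e2F] := hit_cycle o2 s2 cF.
have ne : e1 != e2 by apply: contraNneq (disj _ e1C) => ->.
have : [set e1; e2] \subset F by apply/subsetP=> x /set2P[]->.
move/subset_leq_card; by rewrite cards2 ne.
Qed.

Lemma recolor (T : finType) (E F : {set {set T}}) u1 u2 :
  simple_graph E -> colorable (E :\: F) 2 -> [set u1; u2] \notin E ->
  (forall e, e \in F -> (u1 \in e) || (u2 \in e)) -> colorable E 3.
Proof.
move=> sE /existsP[f /forallP Hf] nu HF.
apply/existsP.
exists [ffun x => if (x == u1) || (x == u2) then (ord_max : 'I_3) else widen_ord (isT : 2 <= 3) (f x)].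
apply/forallP=> x; apply/forallP=> y; apply/implyP=> exy.
have xy := simple_neq sE exy.
rewrite !ffunE.
case: (boolP ((x == u1) || (x == u2))) => hx; case: (boolP ((y == u1) || (y == u2))) => hy.
- exfalso; move: nu; case/orP: hx => /eqP ex; case/orP: hy => /eqP ey; subst.
  + by rewrite eqxx in xy.
  + by rewrite exy.
  + by rewrite setUC exy.
  + by rewrite eqxx in xy.
- case: (f y) => m mlt; apply/negP => /eqP /(congr1 (@nat_of_ord 3)) /=; flia.
- case: (f x) => m mlt; apply/negP => /eqP /(congr1 (@nat_of_ord 3)) /=; flia.
- have nF : [set x; y] \notin F.
    apply/negP => /HF; rewrite !in_set2.
    rewrite ![u1 == _]eq_sym ![u2 == _]eq_sym.
    by move: hx hy; case: (x == u1); case: (x == u2); case: (y == u1); case: (y == u2).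
  move: (Hf x) => /forallP /(_ y) /implyP; rewrite in_setD nF exy => /(_ isT).
  apply: contra => /eqP /(congr1 val) /= e; apply/eqP/val_inj.
  exact: e.
Qed.

Lemma disj_of (T : finType) (E C1 C2 : {set {set T}}) V1 V2 :
  simple_graph E -> odd_cycle_on C1 V1 -> odd_cycle_on C2 V2 -> E = C1 :|: C2 ->
  #|V1 :&: V2| <= 1 -> forall e : {set T}, e \in C1 -> e \notin C2.
Proof.
move=> sE o1 o2 EE h e e1; apply/negP => e2.
have eE : e \in E by rewrite EE in_setU e1.
have : e \subset V1 :&: V2 by rewrite subsetI (cycle_edge_sub o1 e1) (cycle_edge_sub o2 e2).
move/subset_leq_card; rewrite sE //; flia.
Qed.

Lemma crit_helper (T : finType) (E Ca Cb : {set {set T}}) e :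
  simple_graph E -> Ca \subset E -> Cb \subset E -> odd_cycle Ca -> odd_cycle Cb ->
  (forall C : {set {set T}}, C \subset E -> odd_cycle C -> C = Ca \/ C = Cb) ->
  (forall e : {set T}, e \in Ca -> e \notin Cb) -> colorable E 3 -> e \in Ca ->
  es_chi (E :\ e) <= 1.
Proof.
move=> sE sa sb oa ob uq disj c3 ea.
have [hb _] := odd_card ob.
have [f fb] : exists f, f \in Cb by apply/card_gt0P; flia.
have ne : forall g, g \in Cb -> g != e by move=> g gb; apply: contraNneq (disj _ ea) => <-.
have sb' : Cb \subset E :\ e.
  by apply/subsetP=> g gb; rewrite in_setD1 ne // (subsetP sb).
have c3' : chi (E :\ e) = 3 by apply: chi3 ob sb' (colorable_sub (subsetDl _ _) c3).
have -> : 1 = #|[set f]| by rewrite cards1.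
apply: es_le.
  by rewrite sub1set (subsetP sb').
rewrite c3' setDDl /=.
apply: chi2.
- by move=> g /setDP[gE _]; apply: sE.
- apply: (noodd_col2 sE uq ea fb); [exact: set21 | exact: set22].
- have [ha _] := odd_card oa.
  have [g ga gn] := edge_out ha (card_set2_le e f).
  by exists g; rewrite in_setD gn (subsetP sa).
Qed.

Lemma back_core (T : finType) (E C1 C2 : {set {set T}}) V1 V2 :
  simple_graph E -> odd_cycle_on C1 V1 -> odd_cycle_on C2 V2 -> E = C1 :|: C2 ->
  #|V1 :&: V2| <= 1 ->
  (forall C : {set {set T}}, C \subset E -> odd_cycle C -> C = C1 \/ C = C2) ->
  critical32 E.
Proof.
move=> sE oc1 oc2 EE h uq.
have o1 : odd_cycle C1 by exists V1.
have o2 : odd_cycle C2 by exists V2.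
have s1 : C1 \subset E by rewrite EE subsetUl.
have s2 : C2 \subset E by rewrite EE subsetUr.
have disj := disj_of sE oc1 oc2 EE h.
have [u1 [u2 [u1V u2V nu]]] : exists u1 u2, [/\ u1 \in V1, u2 \in V2 & [set u1; u2] \notin E].
  case e0: #|V1 :&: V2| h => [|[|//]] _.
  - have [_ c1] := cycle_card oc1; have [_ c2] := cycle_card oc2.
    have [u1 u1V] : exists u, u \in V1 by apply/card_gt0P; flia.
    have [u2 u2V] : exists u, u \in V2 by apply/card_gt0P; flia.
    exists u1, u2; split => //; apply/negP; rewrite EE in_setU => /orP[] ee.
    + have u2V1 := subsetP (cycle_edge_sub oc1 ee) u2 (set22 _ _).
      have : 0 < #|V1 :&: V2| by apply/card_gt0P; exists u2; rewrite in_setI u2V1 u2V.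
      by rewrite e0.
    + have u1V2 := subsetP (cycle_edge_sub oc2 ee) u1 (set21 _ _).
      have : 0 < #|V1 :&: V2| by apply/card_gt0P; exists u1; rewrite in_setI u1V2 u1V.
      by rewrite e0.
  - have /cards1P[x ex] : #|V1 :&: V2| == 1 by rewrite e0.
    have : x \in V1 :&: V2 by rewrite ex set11.
    case/setIP => xV1 xV2; exists x, x; split => //.
    by apply/negP => /(simple_neq sE); rewrite eqxx.
have [e1 e1C u1e] := cycle_vertex_edge oc1 u1V.
have [e2 e2C u2e] := cycle_vertex_edge oc2 u2V.
have col2F : colorable (E :\: [set e1; e2]) 2.
  by apply: (noodd_col2 sE uq e1C e2C); [exact: set21 | exact: set22].
have col3 : colorable E 3.
  apply: (recolor sE col2F nu) => e /set2P[]->; by rewrite ?u1e ?u2e ?orbT.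
have chi3E : chi E = 3 := chi3 o1 s1 col3.
have es2 : es_chi E = 2.
  apply/eqP; rewrite eqn_leq (es_ge2 s1 s2 o1 o2 disj chi3E) andbT.
  apply: (leq_trans (es_le (F := [set e1; e2]) _ _)) (card_set2_le e1 e2).
    by apply/subsetP=> e /set2P[]->; [exact: (subsetP s1) | exact: (subsetP s2)].
  rewrite chi3E /=; apply: chi2 => //.
    by move=> g /setDP[gE _]; apply: sE.
  have [ha _] := odd_card o1.
  have [g ga gn] := edge_out ha (card_set2_le e1 e2).
  by exists g; rewrite in_setD gn (subsetP s1).
split => //.
move=> e eE; rewrite es2.
have : e \in C1 :|: C2 by rewrite -EE.
case/setUP => ee.
- exact: (leq_ltn_trans (crit_helper sE s1 s2 o1 o2 uq disj col3 ee)).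
- have uq' : forall C : {set {set T}}, C \subset E -> odd_cycle C -> C = C2 \/ C = C1.
    by move=> C sC oC; case: (uq C sC oC); auto.
  have disj' : forall e : {set T}, e \in C2 -> e \notin C1.
    by move=> g g2; apply/negP => g1; move: (disj g g1); rewrite g2.
  exact: (leq_ltn_trans (crit_helper sE s2 s1 o2 o1 uq' disj' col3 ee)).
Qed.

Lemma forward (T : finType) (E : {set {set T}}) :
  simple_graph E -> no_isolated_vertex E -> exactly_two_odd_cycles E ->
  critical32 E -> in_family_A E \/ in_family_B E.
Proof.
move=> sE ni [C1 [C2 [neq [s1 s2 o1 o2 uq]]]] [crit c3 es2].
have col3 : colorable E 3 by rewrite -c3; apply: chi_col.
have [h1 _] := odd_card o1.
have disj : forall e : {set T}, e \in C1 -> e \notin C2.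
  move=> e e1; apply/negP => e2.
  have : es_chi E <= #|[set e]|.
    apply: es_le; first by rewrite sub1set (subsetP s1).
    rewrite c3 /=; apply: chi2.
    - by move=> g /setDP[gE _]; apply: sE.
    - by apply: (noodd_col2 sE uq e1 e2); exact: set11.
    - have [g ga gn] := edge_out h1 (leq_trans (eq_leq (cards1 e)) (isT : 1 <= 2)).
      by exists g; rewrite in_setD gn (subsetP s1).
  by rewrite es2 cards1.
have EE : E = C1 :|: C2.
  apply/eqP; rewrite eqEsubset; apply/andP; split; last by rewrite subUset s1 s2.
  apply/subsetP => f fE; apply/negPn/negP => nf.
  move: nf; rewrite in_setU negb_or => /andP[f1 f2].
  have sub : forall C : {set {set T}}, f \notin C -> C \subset E -> C \subset E :\ f.
    move=> C fC sC; apply/subsetP=> g gC; rewrite in_setD1 (subsetP sC) // andbT.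
    by apply: contraNneq fC => <-.
  have s1' := sub _ f1 s1; have s2' := sub _ f2 s2.
  have c3' : chi (E :\ f) = 3 by apply: chi3 o1 s1' (colorable_sub (subsetDl _ _) col3).
  have := es_ge2 s1' s2' o1 o2 disj c3'.
  have := crit f fE; rewrite es2; lia.
case: o1 => V1 oc1; case: o2 => V2 oc2.
have cover : V1 :|: V2 = setT.
  apply/setP=> x; rewrite in_setT in_setU; have [e eE xe] := ni x.
  have : e \in C1 :|: C2 by rewrite -EE.
  case/setUP => ee.
  + by rewrite (subsetP (cycle_edge_sub oc1 ee) x xe).
  + by rewrite (subsetP (cycle_edge_sub oc2 ee) x xe) orbT.
have le1 : #|V1 :&: V2| <= 1.
  rewrite leqNgt; apply/negP => /card_gt1P[u [w [uI wI uw]]].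
  move: uI wI; rewrite !in_setI => /andP[u1 u2] /andP[w1 w2].
  exact: (third_cycle sE s1 s2 uq disj oc1 oc2 u1 u2 w1 w2 uw).
case e0: #|V1 :&: V2| le1 => [|[|//]] _.
- left; exists C1, V1, C2, V2; split => //.
- right; exists C1, V1, C2, V2; split => //.
Qed.

Lemma backward (T : finType) (E : {set {set T}}) :
  simple_graph E -> exactly_two_odd_cycles E ->
  in_family_A E \/ in_family_B E -> critical32 E.
Proof.
move=> sE [D1 [D2 [neq [sd1 sd2 od1 od2 uqd]]]] fam.
have [C1 [V1 [C2 [V2 [oc1 oc2 EE cov h]]]]] : exists C1 V1 C2 V2,
   [/\ odd_cycle_on C1 V1, odd_cycle_on C2 V2, E = C1 :|: C2, V1 :|: V2 = setT & #|V1 :&: V2| <= 1].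
  case: fam => [[C1 [V1 [C2 [V2 [a b c d e]]]]]|[C1 [V1 [C2 [V2 [a b c d e]]]]]];
  by exists C1, V1, C2, V2; split => //; rewrite e.
apply: (back_core sE oc1 oc2 EE h).
have o1 : odd_cycle C1 by exists V1.
have o2 : odd_cycle C2 by exists V2.
have s1 : C1 \subset E by rewrite EE subsetUl.
have s2 : C2 \subset E by rewrite EE subsetUr.
have disj := disj_of sE oc1 oc2 EE h.
have ne : C1 != C2.
  have [h1 _] := odd_card o1.
  have [f f1] : exists f, f \in C1 by apply/card_gt0P; flia.
  by apply: contraNneq (disj f f1) => <-.
move=> C sC oC.
case: (uqd C sC oC) => ->; case: (uqd _ s1 o1) => e1; case: (uqd _ s2 o2) => e2;
  subst; auto; by rewrite eqxx in ne.
Qed.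

Unset Implicit Arguments.
Theorem theorem2p2 (T : finType) (E : {set {set T}}) :
  simple_graph E -> no_isolated_vertex E -> exactly_two_odd_cycles E ->
  (critical32 E <-> in_family_A E \/ in_family_B E).
Proof.
move=> sE ni two; split; [exact: forward | exact: backward].
Qed.
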